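(* Let $V$ be a finite nonempty set and $f:\{0,1\}^V\to\{0,1\}^V$ be non-expansive. (1) If for every $1\le k\le |V|$ there are at most $2^k-1$ points $x\in\{0,1\}^V$ such that $Gf(x)$ has a chordless positive cycle of length $k$, then $f$ has at most one fixed point. (2) If for every $1\le k\le |V|$ there are at most $2^k-1$ points $x\in\{0,1\}^V$ such that $Gf(x)$ has a chordless negative cycle of length $k$, then $f$ has at least one fixed point.
   Context: $d$ is the Hamming distance; $f$ is non-expansive if $d(f(x),f(y))\le d(x,y)$ for all $x,y$. For $x^{j\alpha}$ the point equal to $x$ except its $j$-component is $\alpha$, the local interaction graph $Gf(x)$ is the signed digraph on $V$ with a positive arc from $j$ to $i$ if $f_i(x^{j1})-f_i(x^{j0})=1$ and a negative arc if it equals $-1$ (loops allowed). A cycle of a signed digraph $G$ is a subgraph whose underlying unsigned digraph is a directed cycle (length = number of arcs); it is positive (negative) if it has an even (odd) number of negative arcs; it is chordless if its underlying unsigned digraph is an induced subgraph of the underlying unsigned digraph of $G$. *)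

(* Defs.v *)
From mathcomp Require Import all_boot.
Set Implicit Arguments. Unset Strict Implicit. Unset Printing Implicit Defensive.

(* Points of {0,1}^V are finite functions V -> bool (true = 1, false = 0). *)
Notation point V := {ffun V -> bool}.

Definition hamming (V : finType) (x y : point V) : nat := #|[set i | x i != y i]|.

Definition nonexpansive (V : finType) (f : point V -> point V) : Prop :=
  forall x y, hamming (f x) (f y) <= hamming x y.

Definition flip (V : finType) (x : point V) (j : V) (a : bool) : point V :=
  [ffun i => if i == j then a else x i].

(* positive arc j -> i in Gf(x): f_i(x^{j1}) - f_i(x^{j0}) = 1 *)
Definition arc_pos (V : finType) (f : point V -> point V) (x : point V) (j i : V) : bool :=
  f (flip x j true) i && ~~ f (flip x j false) i.
(* negative arc j -> i in Gf(x): f_i(x^{j1}) - f_i(x^{j0}) = -1 *)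
Definition arc_neg (V : finType) (f : point V -> point V) (x : point V) (j i : V) : bool :=
  ~~ f (flip x j true) i && f (flip x j false) i.
Definition arc (V : finType) (f : point V -> point V) (x : point V) (j i : V) : bool :=
  arc_pos f x j i || arc_neg f x j i.

(* A cycle of length k is given by a duplicate-free sequence c = [v_0;..;v_{k-1}]
   with arcs v_t -> v_{t+1 mod k} (next c v is the cyclic successor).  Its sign is the parity of the number of negative arcs. *)
Definition chordless_cycle (V : finType) (f : point V -> point V) (x : point V)
  (c : seq V) : bool :=
  [&& uniq c, cycle (arc f x) c &
      [forall u, forall v, (u \in c) && (v \in c) && arc f x u v ==> (v == next c u)]].

Definition num_neg_arcs (V : finType) (f : point V -> point V) (x : point V)
  (c : seq V) : nat := count (fun v => arc_neg f x v (next c v)) c.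

Definition has_chordless_pos_cycle (V : finType) (f : point V -> point V)
  (x : point V) (k : nat) : bool :=
  [exists c : k.-tuple V, chordless_cycle f x c && ~~ odd (num_neg_arcs f x c)].

Definition has_chordless_neg_cycle (V : finType) (f : point V -> point V)
  (x : point V) (k : nat) : bool :=
  [exists c : k.-tuple V, chordless_cycle f x c && odd (num_neg_arcs f x c)].

(* Main.v *)
Require Import Defs.
From mathcomp Require Import all_boot.
From mathcomp Require Import zify.
Require Import Defs.

Set Implicit Arguments. Unset Strict Implicit. Unset Printing Implicit Defensive.

Definition pt (V : finType) (x : point V) (S : {set V}) : point V :=
  [ffun i => if i \in S then ~~ x i else x i].

Definition tw (V : finType) (f : point V -> point V) (t : V -> bool) : point V -> point V :=
  fun z => [ffun i => f z i (+) t i].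

Lemma arcE (V : finType) (f : point V -> point V) z u w :
  arc f z u w = (f (flip z u true) w != f (flip z u false) w).
Proof. by rewrite /arc /arc_pos /arc_neg; case: (f _ w); case: (f _ w). Qed.

Lemma tw_arc (V : finType) (f : point V -> point V) t a b w :
  (tw f t a w != tw f t b w) = (f a w != f b w).
Proof. by rewrite !ffunE; case: (f a w); case: (f b w); case: (t w). Qed.

Lemma tw_nonexp (V : finType) (f : point V -> point V) t :
  nonexpansive f -> nonexpansive (tw f t).
Proof.
move=> H a b; rewrite /hamming.
have -> : [set i | tw f t a i != tw f t b i] = [set i | f a i != f b i].
  by apply/setP => i; rewrite !inE tw_arc.
exact: H.
Qed.

Lemma ptDx (V : finType) (x : point V) S : [set i | pt x S i != x i] = S.
Proof. by apply/setP=> i; rewrite !inE ffunE; case: (i \in S); case: (x i). Qed.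

Lemma hamming_x_pt (V : finType) (x : point V) S : hamming x (pt x S) = #|S|.
Proof.
rewrite /hamming -[in RHS](ptDx x S); apply: eq_card => i; rewrite !inE.
by rewrite eq_sym.
Qed.

Lemma hamming_pt (V : finType) (x : point V) S T :
  hamming (pt x S) (pt x T) = #|[set i | (i \in S) != (i \in T)]|.
Proof.
rewrite /hamming; apply: eq_card => i; rewrite !inE !ffunE.
by case: (i \in S); case: (i \in T); case: (x i).
Qed.

Lemma pt0 (V : finType) (x : point V) : pt x set0 = x.
Proof. by apply/ffunP=> i; rewrite ffunE inE. Qed.

Lemma ptI (V : finType) (x y : point V) : pt x [set i | x i != y i] = y.
Proof. by apply/ffunP=> i; rewrite ffunE inE; case: (x i); case: (y i). Qed.

Lemma pt_inj (V : finType) (x : point V) : injective (pt x).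
Proof. by move=> S T E; rewrite -(ptDx x S) -(ptDx x T) E. Qed.

Lemma symd_sub (V : finType) (S T : {set V}) :
  S \subset T -> [set i | (i \in S) != (i \in T)] = T :\: S.
Proof.
move=> /subsetP sST; apply/setP=> i; rewrite !inE.
by case iS: (i \in S); [rewrite (sST _ iS) | case: (i \in T)].
Qed.

Lemma count_false (T : Type) (s : seq T) : count (fun _ => false) s = 0.
Proof. by elim: s. Qed.

Lemma odd_count_addb (T : Type) (a b : T -> bool) (s : seq T) :
  odd (count (fun v => a v (+) b v) s) = odd (count a s) (+) odd (count b s).
Proof.
elim: s => //= u s IH; rewrite !oddD IH.
by case: (a u); case: (b u); case: (odd (count a s)); case: (odd (count b s)).
Qed.

Lemma core (V : finType) (h : point V -> point V) (J : {set V}) (x y : point V) :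
  nonexpansive h ->
  (forall i, i \in J -> h x i = x i) ->
  (forall i, i \in J -> h y i = y i) ->
  [set i | x i != y i] \subset J -> x != y ->
  (forall S : {set V}, S \subset [set i | x i != y i] ->
     (forall i, i \in J -> h (pt x S) i = pt x S i) ->
     S = set0 \/ S = [set i | x i != y i]) ->
  exists pi : V -> V,
    [/\ injective pi, pi @: [set i | x i != y i] = [set i | x i != y i],
     (forall S : {set V}, S \subset [set i | x i != y i] -> S != set0 -> pi @: S \subset S ->
         S = [set i | x i != y i]) &
     forall (S : {set V}) u, S \subset [set i | x i != y i] -> u \in [set i | x i != y i] ->
       (forall w, (h (flip (pt x S) u true) w != h (flip (pt x S) u false) w) = (w == pi u))
       /\ h (flip (pt x S) u (~~ x u)) (pi u) = ~~ x (pi u)].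
Proof.
move=> hne hx hy IJ xy hmin.
set I := [set i | x i != y i] in IJ hmin *.
have hy' : y = pt x I by rewrite /I ptI.
pose F S := [set i in J | h (pt x S) i != x i].
have FA : forall S : {set V}, S \subset I -> F S \subset I /\ #|F S| = #|S|.
  move=> S SI.
  pose B := [set i in J | h (pt x S) i != y i].
  have cA : #|F S| <= #|S|.
    have -> : #|S| = hamming (pt x S) x by rewrite /hamming ptDx.
    apply: leq_trans (hne _ _).
    apply: subset_leq_card; apply/subsetP=> i; rewrite !inE => /andP[iJ].
    by rewrite hx.
  have cB : #|B| <= #|I :\: S|.
    have -> : #|I :\: S| = hamming (pt x S) y.
      by rewrite hy' hamming_pt (symd_sub SI).
    apply: leq_trans (hne _ _).
    apply: subset_leq_card; apply/subsetP=> i; rewrite !inE => /andP[iJ].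
    by rewrite hy.
  have cI : #|I| = #|S| + #|I :\: S|.
    by rewrite -(cardsID S I) (setIidPr SI).
  have IAB : I \subset F S :|: B.
    apply/subsetP=> i iI; have iJ := subsetP IJ i iI; move: iI.
    rewrite /F /B !inE iJ /=.
    by case: (h (pt x S) i); case: (x i); case: (y i).
  have c0 : #|F S :&: B| = 0.
    have := cardsUI (F S) B; have := subset_leq_card IAB; lia.
  have AI : F S \subset I.
    apply/subsetP=> i iA; case iI: (i \in I) => //.
    have : i \in F S :&: B.
      move: iA iI; rewrite /F /B !inE => /andP[iJ a] /negbT; rewrite negbK => /eqP e.
      by rewrite iJ -e a.
    by rewrite (cards0_eq c0) inE.
  split => //.
  have := cardsUI (F S) B; have := subset_leq_card IAB; lia.
have FB : forall S T : {set V}, S \subset T -> T \subset I -> F S \subset F T.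
  move=> S T ST TI; have SI := subset_trans ST TI.
  have [AS cS] := FA S SI; have [AT cT] := FA T TI.
  have XY0 : (F S :\: F T) :&: (F T :\: F S) = set0.
    apply/setP=> i; rewrite !in_setI !in_setD in_set0.
    by case: (i \in F S); case: (i \in F T).
  have cXY : #|F S :\: F T| + #|F T :\: F S| <= #|T| - #|S|.
    have -> : #|T| - #|S| = hamming (pt x S) (pt x T).
      rewrite hamming_pt (symd_sub ST); have := cardsID S T; rewrite (setIidPr ST); lia.
    apply: leq_trans (hne _ _).
    rewrite -cardsUI XY0 cards0 addn0.
    apply: subset_leq_card; apply/subsetP => i; rewrite in_setU !in_setD.
    rewrite /F !inE.
    case: (i \in J) => //=.
    by case: (h (pt x S) i); case: (h (pt x T) i); case: (x i).
  have e1 := cardsID (F S) (F T); have e2 := cardsID (F T) (F S).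
  rewrite setIC in e2.
  have X0 : #|F S :\: F T| = 0 by lia.
  by rewrite -setD_eq0 -cards_eq0 X0.
have FC : forall S : {set V}, S \subset I -> F S = S -> S = set0 \/ S = I.
  move=> S SI FSS; apply: hmin => // i iJ.
  have [AS _] := FA S SI.
  have ptE : pt x S i = if i \in S then ~~ x i else x i by rewrite /pt ffunE.
  rewrite ptE; case iI: (i \in I).
  - have E : (h (pt x S) i != x i) = (i \in S) by rewrite -{2}FSS /F inE iJ.
    move: E; case: (i \in S); case: (h (pt x S) i); case: (x i) => //.
  - have iS : (i \in S) = false by apply: negbTE; apply: contraFN iI; apply: (subsetP SI).
    have : i \notin F S by apply: contraFN iI; apply: (subsetP AS).
    rewrite iS /F inE iJ /= negbK => /eqP //.
pose pi u := if u \in I then odflt u [pick w in F [set u]] else u.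
have FS1 : forall u, u \in I -> F [set u] = [set pi u].
  move=> u uI; have [_ c1] := FA [set u] ltac:(by rewrite sub1set).
  rewrite cards1 in c1.
  have /cards1P [w Ew] : #|F [set u]| == 1 by rewrite c1.
  rewrite /pi uI Ew; case: pickP => [w' |/(_ w)]; rewrite inE ?eqxx //.
  by move=> /eqP ->.
have piout : forall u, u \notin I -> pi u = u by move=> u /negbTE uI; rewrite /pi uI.
have piI : forall u, u \in I -> pi u \in I.
  move=> u uI; have [AS _] := FA [set u] ltac:(by rewrite sub1set).
  by apply: (subsetP AS); rewrite FS1 // inE.
have Ssup : forall S : {set V}, S \subset I -> pi @: S \subset F S.
  move=> S SI; apply/subsetP => w /imsetP[u uS ->].
  have uI := subsetP SI u uS.
  have : pi u \in F [set u] by rewrite FS1 // inE.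
  by apply: (subsetP (FB _ _ _ SI)); rewrite sub1set.
have FD : forall S : {set V}, S \subset I -> pi @: S = S -> F S = S.
  move=> S SI eS; apply/esym/eqP; rewrite eqEcard.
  have [_ ->] := FA S SI; rewrite leqnn andbT -{1}eS; exact: Ssup.
have FE : forall S : {set V}, S \subset I -> S != set0 -> pi @: S \subset S -> S = I.
  move=> S SI S0 cl.
  pose P n := [exists T : {set V}, [&& T \subset S, T != set0, pi @: T \subset T & #|T| == n]].
  have exP : exists n, P n by exists #|S|; apply/existsP; exists S; rewrite subxx S0 cl eqxx.
  case: (ex_minnP exP) => m /existsP[T /and4P[TS T0 Tcl /eqP cT]] minm.
  have TI := subset_trans TS SI.
  have eT : pi @: T = T.
    apply/eqP; rewrite eqEcard Tcl /= cT; apply: minm; apply/existsP; exists (pi @: T).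
    rewrite (subset_trans Tcl TS) imsetS //= eqxx andbT.
    case/set0Pn: T0 => u uT; apply/set0Pn; exists (pi u); exact: imset_f.
  case: (FC T TI (FD T TI eT)) => [T0'|TeI]; first by rewrite T0' eqxx in T0.
  by apply/eqP; rewrite eqEsubset SI /= -TeI.
have I0 : I != set0.
  case: (boolP [exists i, x i != y i]) => [/existsP[i ni]|/existsPn H].
    by apply/set0Pn; exists i; rewrite inE.
  by case/eqP: xy; apply/ffunP => i; apply/eqP; exact: negbNE (H i).
have piII : pi @: I = I.
  apply: FE.
  - by apply/subsetP => w /imsetP[u uI ->]; exact: piI.
  - case/set0Pn: I0 => u uI; apply/set0Pn; exists (pi u); exact: imset_f.
  - apply: imsetS; by apply/subsetP => w /imsetP[u uI ->]; exact: piI.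
have injI : {in I &, injective pi} by apply/imset_injP; rewrite piII.
have inj : injective pi.
  move=> a b; case aI: (a \in I); case bI: (b \in I).
  - exact: injI.
  - by move=> E; move: (piI a aI); rewrite E piout ?bI.
  - by move=> E; move: (piI b bI); rewrite -E piout ?aI.
  - by rewrite !piout ?aI ?bI.
have FeqS : forall S : {set V}, S \subset I -> F S = pi @: S.
  move=> S SI; apply/eqP; rewrite eq_sym eqEcard Ssup //= card_imset //.
  by have [_ ->] := FA S SI.
exists pi; split => // S u SI uI.
have f1 : flip (pt x S) u (~~ x u) = pt x (S :|: [set u]).
  apply/ffunP => i; rewrite /flip /pt !ffunE in_setU in_set1.
  by case: eqP => [->|_]; rewrite ?orbT ?orbF.
have f0 : flip (pt x S) u (x u) = pt x (S :\ u).
  apply/ffunP => i; rewrite /flip /pt !ffunE in_setD1.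
  by case: eqP => [->|_].
have S1I : S :|: [set u] \subset I by rewrite subUset SI sub1set uI.
have S0I : S :\ u \subset I := subset_trans (subD1set S u) SI.
have a1 : pi u \in F (S :|: [set u]).
  by rewrite FeqS //; apply: imset_f; rewrite in_setU in_set1 eqxx orbT.
have a0 : pi u \notin F (S :\ u).
  rewrite FeqS //; apply/imsetP => -[w wS /inj E].
  by rewrite -E in_setD1 eqxx in wS.
have piJ : pi u \in J := subsetP IJ _ (piI u uI).
move: a1 a0; rewrite /F !inE piJ /= negbK => a1 /eqP a0.
have dif : [set w | h (pt x (S :|: [set u])) w != h (pt x (S :\ u)) w] = [set pi u].
  apply/eqP; rewrite eq_sym eqEcard sub1set inE a0 a1 cards1 /=.
  apply: leq_trans (hne (pt x (S :|: [set u])) (pt x (S :\ u))) _.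
  rewrite hamming_pt.
  have -> : [set i | (i \in S :|: [set u]) != (i \in S :\ u)] = [set u].
    apply/setP => i; rewrite !inE.
    by case: (i =P u) => [->|_] /=; case: (_ \in S).
  by rewrite cards1.
split.
- move=> w.
  have : (w \in [set pi u]) = (h (pt x (S :|: [set u])) w != h (pt x (S :\ u)) w)
    by rewrite -dif inE.
  rewrite in_set1 => ->.
  move: f0 f1; case: (x u) => /= -> ->; by rewrite // eq_sym.
- rewrite f1; move: a1; by case: (h _ (pi u)); case: (x (pi u)).
Qed.

Lemma arc_info (V : finType) (f : point V -> point V) (t : V -> bool) (pi : V -> V)
  (x z : point V) u :
  (forall w, (tw f t (flip z u true) w != tw f t (flip z u false) w) = (w == pi u)) ->
  tw f t (flip z u (~~ x u)) (pi u) = ~~ x (pi u) ->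
  (forall w, arc f z u w = (w == pi u)) /\
  arc_neg f z u (pi u) = x u (+) x (pi u) (+) t (pi u).
Proof.
move=> H1 H2.
have H1' : forall w, arc f z u w = (w == pi u) by move=> w; rewrite arcE -H1 tw_arc.
split => //.
have := H1' (pi u); rewrite eqxx /arc /arc_neg /arc_pos.
move: H2; rewrite /tw ffunE; case: (x u) => /=;
by case: (f (flip z u true) (pi u)); case: (f (flip z u false) (pi u));
   case: (x (pi u)); case: (t (pi u)).
Qed.

Lemma cyc (V : finType) (f : point V -> point V) (t : V -> bool) (pi : V -> V)
  (I : {set V}) (x z : point V) :
  injective pi -> pi @: I = I ->
  (forall S : {set V}, S \subset I -> S != set0 -> pi @: S \subset S -> S = I) ->
  I != set0 ->
  (forall u, u \in I -> (forall w, arc f z u w = (w == pi u)) /\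
      arc_neg f z u (pi u) = x u (+) x (pi u) (+) t (pi u)) ->
  exists c : seq V, [/\ size c = #|I|, chordless_cycle f z c, c =i I &
      odd (num_neg_arcs f z c) = odd (count t c)].
Proof.
move=> inj piII irr I0 H.
case/set0Pn: I0 => j0 j0I.
pose c := orbit pi j0.
have uc : uniq c := orbit_uniq pi j0.
have fc : fcycle pi c := cycle_orbit inj j0.
have piI : forall u, u \in I -> pi u \in I by move=> u uI; rewrite -piII imset_f.
have cI : forall w, w \in c -> w \in I.
  move=> w /trajectP[i _ ->]; elim: i => [|i IH] //=; exact: piI.
have cset : [set w in c] = I.
  apply: irr.
  - by apply/subsetP => w; rewrite inE; exact: cI.
  - by apply/set0Pn; exists j0; rewrite inE -fconnect_orbit connect0.
  - apply/subsetP => w /imsetP[u]; rewrite inE => uc' ->; rewrite inE.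
    exact: mem_orbit.
have memc : c =i I by move=> w; rewrite -cset inE.
have sz : size c = #|I| by rewrite -cset cardsE (card_uniqP uc).
have nx : forall u, u \in c -> next c u = pi u := nextE fc.
exists c; split => //.
- rewrite /chordless_cycle uc /=; apply/andP; split.
    apply: cycle_from_next => // u uc'.
    by rewrite nx // (proj1 (H u (cI u uc'))) eqxx.
  apply/forallP => u; apply/forallP => w; apply/implyP => /andP[/andP[uc' _]].
  by rewrite (proj1 (H u (cI _ uc'))) nx.
- rewrite /num_neg_arcs (@eq_in_count _ _ (fun v => (x v (+) x (pi v)) (+) t (pi v))); last first.
    by move=> v vc; rewrite /= nx // (proj2 (H v (cI _ vc))).
  have pc : perm_eq (map pi c) c.
    apply: uniq_perm; first by rewrite (map_inj_uniq inj).
      done.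
    move=> w; apply/mapP/idP => [[u uc' ->]|wc].
      exact: mem_orbit.
    have : w \in pi @: I by rewrite piII -memc.
    by case/imsetP => u uI ->; exists u => //; rewrite memc.
  have cp : forall g : V -> bool, count (fun v => g (pi v)) c = count g c.
    by move=> g; rewrite -(count_map pi g); apply/permP.
  rewrite (odd_count_addb (fun v => x v (+) x (pi v)) (fun v => t (pi v))).
  rewrite (odd_count_addb (fun v => x v) (fun v => x (pi v))).
  by rewrite !cp addbb.
Qed.

Lemma count_pts (V : finType) (x : point V) (I : {set V}) (P : pred (point V)) :
  (forall S : {set V}, S \subset I -> P (pt x S)) -> 2 ^ #|I| <= #|[set z | P z]|.
Proof.
move=> H; rewrite -card_powerset -(card_imset _ (@pt_inj V x)).
apply: subset_leq_card; apply/subsetP => z /imsetP[S]; rewrite inE => SI ->.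
by apply: H; move: SI; rewrite ?inE ?powersetE.
Qed.

Lemma ar1 n : 0 < n -> n <= n - 1 -> False.
Proof. lia. Qed.

Lemma ar2 a b c : a + b = c -> c <= b -> a = 0.
Proof. lia. Qed.

Lemma I_ne0 (V : finType) (x y : point V) : x != y -> [set i | x i != y i] != set0.
Proof.
move=> xy; case: (boolP [exists i, x i != y i]) => [/existsP[i ni]|/existsPn H].
  by apply/set0Pn; exists i; rewrite inE.
by case/eqP: xy; apply/ffunP => i; apply/eqP; exact: negbNE (H i).
Qed.

Theorem corollary8 (V : finType) (f : point V -> point V) :
  0 < #|V| -> nonexpansive f ->
  ((forall k, 1 <= k <= #|V| ->
      #|[set x : point V | has_chordless_pos_cycle f x k]| <= 2 ^ k - 1) ->
    #|[set x : point V | f x == x]| <= 1)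
  /\
  ((forall k, 1 <= k <= #|V| ->
      #|[set x : point V | has_chordless_neg_cycle f x k]| <= 2 ^ k - 1) ->
    exists x : point V, f x = x).
Proof.
move=> V0 ne; split.
- move=> Hc; rewrite leqNgt; apply/negP => /card_gt1P [a [b [aF bF ab]]].
  move: aF bF; rewrite !inE => fa fb.
  pose t := fun _ : V => false.
  pose h := tw f t.
  have hE : forall z, h z = f z by move=> z; apply/ffunP => i; rewrite ffunE addbF.
  pose P n := [exists q : point V * point V,
     [&& f q.1 == q.1, f q.2 == q.2, q.1 != q.2 & hamming q.1 q.2 == n]].
  have exP : exists n, P n by exists (hamming a b); apply/existsP; exists (a, b); rewrite /= fa fb ab eqxx.
  case: (ex_minnP exP) => m /existsP[[x y] /= /and4P[fx fy xy /eqP hxy]] minm.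
  have [pi [inj piII irr flp]] : exists pi : V -> V,
    [/\ injective pi, pi @: [set i | x i != y i] = [set i | x i != y i],
     (forall S : {set V}, S \subset [set i | x i != y i] -> S != set0 -> pi @: S \subset S ->
         S = [set i | x i != y i]) &
     forall (S : {set V}) u, S \subset [set i | x i != y i] -> u \in [set i | x i != y i] ->
       (forall w, (h (flip (pt x S) u true) w != h (flip (pt x S) u false) w) = (w == pi u))
       /\ h (flip (pt x S) u (~~ x u)) (pi u) = ~~ x (pi u)].
    apply: (core (J := setT)).
    + exact: tw_nonexp.
    + by move=> i _; rewrite hE (eqP fx).
    + by move=> i _; rewrite hE (eqP fy).
    + exact: subsetT.
    + exact: xy.
    + move=> S SI Sfix.
      have fS : f (pt x S) = pt x S by apply/ffunP=> i; rewrite -hE Sfix ?inE.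
      case: (S =P set0) => [->|/eqP S0]; [by left|right].
      apply/eqP; rewrite eqEcard SI /=.
      have <- : hamming x y = #|[set i | x i != y i]| by [].
      rewrite hxy -(hamming_x_pt x S); apply: minm; apply/existsP; exists (x, pt x S).
      rewrite /= fx fS !eqxx /= andbT.
      apply/eqP => E; move/eqP: S0; apply; apply: (@pt_inj _ x); by rewrite pt0 -E.
  set I := [set i | x i != y i] in piII irr flp.
  have I0 : I != set0 by exact: I_ne0.
  have k1 : 1 <= #|I| <= #|V| by rewrite card_gt0 I0 max_card.
  have := Hc #|I| k1.
  have : 2 ^ #|I| <= #|[set z | has_chordless_pos_cycle f z #|I|]|.
    apply: (@count_pts V x I (fun z => has_chordless_pos_cycle f z #|I|)) => S SI.
    have [c [sz ch mc par]] := @cyc V f t pi I x (pt x S) inj piII irr I0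
      (fun u uI => arc_info (proj1 (flp S u SI uI)) (proj2 (flp S u SI uI))).
    have sz' : size c == #|I| by rewrite sz.
    apply/existsP; exists (Tuple sz'); rewrite /= ch /= par count_false //.
  move=> p2 p3; have := leq_trans p2 p3.
  have : 0 < 2 ^ #|I| by rewrite expn_gt0.
  lia.
- move=> Hc.
  case: (boolP [exists z, f z == z]) => [/existsP[z /eqP fz]|nf]; first by exists z.
  exfalso.
  have nfz : forall z, f z != z.
    by move=> z; apply/negP => fz; move/negP: nf; apply; apply/existsP; exists z.
  pose rf (q : {set V} * point V) := [exists z : point V,
     [forall i, (i \notin q.1) ==> (z i == q.2 i)] && [forall i in q.1, f z i == z i]].
  pose P n := [exists q : {set V} * point V, ~~ rf q && (#|q.1| == n)].
  have exP : exists n, P n.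
    exists #|[set: V]|; apply/existsP; exists ([set: V], [ffun _ => false]).
    rewrite eqxx andbT; apply/existsP => -[z /andP[_ /forallP Hz]].
    apply: (negP (nfz z)); apply/eqP/ffunP => i; apply/eqP; have := Hz i.
    by rewrite in_setT.
  case: (ex_minnP exP) => m /existsP[[J p] /= /andP[nrf /eqP cJ]] minm.
  have J0 : J != set0.
    apply/negP => /eqP J0; apply: (negP nrf); apply/existsP; exists p.
    by rewrite J0; apply/andP; split; apply/forallP => i; rewrite ?eqxx ?in_set0 ?implybT.
  case/set0Pn: J0 => v vJ.
  pose t := fun i : V => i == v.
  pose h := tw f t.
  have sub : forall b, exists a : point V,
      [/\ forall i, i \notin J -> a i = p i, a v = b & forall i, i \in J -> h a i = a i].
    move=> b.
    have : rf (J :\ v, flip p v b).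
      apply: contraT => nr.
      have : m <= #|J :\ v|.
        by apply: minm; apply/existsP; exists (J :\ v, flip p v b); rewrite nr eqxx.
      rewrite -cJ (cardsD1 v J) vJ /=; lia.
    case/existsP => a /andP[/forallP Ho /forallP Hi] /=.
    have av : a v = b.
      by have := Ho v; rewrite /= !inE eqxx /= ffunE eqxx => /eqP.
    have aout : forall i, i \notin J -> a i = p i.
      move=> i iJ; have iv : i != v by apply: contraNneq iJ => ->.
      by have := Ho i; rewrite /= !inE (negbTE iJ) andbF /= ffunE (negbTE iv) => /eqP.
    have ain : forall i, i \in J -> i != v -> f a i = a i.
      by move=> i iJ iv; have := Hi i; rewrite /= in_setD1 iv iJ /= => /eqP.
    have fav : f a v != a v.
      apply/negP => /eqP fav; apply: (negP nrf); apply/existsP; exists a.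
      apply/andP; split; apply/forallP => i; apply/implyP => iJ /=.
        by rewrite aout.
      by case: (i =P v) => [->|/eqP iv]; rewrite ?fav // ain.
    exists a; split => // i iJ.
    rewrite /h /tw ffunE /t /=.
    case: eqP => [->|iv].
      by rewrite addbT; move: fav; case: (f a v); case: (a v).
    by rewrite addbF ain //; apply/eqP.
  have [a0 [a0o a0v a0J]] := sub false.
  have [a1 [a1o a1v a1J]] := sub true.
  pose good (z : point V) :=
    [forall i, (i \notin J) ==> (z i == p i)] && [forall i in J, h z i == z i].
  have goodI : forall z : point V, (forall i, i \notin J -> z i = p i) ->
      (forall i, i \in J -> h z i = z i) -> good z.
    move=> z H1 H2; apply/andP; split; apply/forallP => i; apply/implyP => iJ.
      by rewrite H1.
    by rewrite H2.
  pose Q n := [exists q : point V * point V,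
     [&& good q.1, good q.2, q.1 v != q.2 v & hamming q.1 q.2 == n]].
  have exQ : exists n, Q n.
    exists (hamming a0 a1); apply/existsP; exists (a0, a1).
    by rewrite /= !goodI // a0v a1v eqxx.
  case: (ex_minnP exQ) => m2 /existsP[[x y] /= /and4P[gx gy xyv /eqP hxy]] minm2.
  have xo : forall i, i \notin J -> x i = p i.
    by move=> i iJ; case/andP: gx => /forallP /(_ i); rewrite iJ => /eqP.
  have xJ : forall i, i \in J -> h x i = x i.
    by move=> i iJ; case/andP: gx => _ /forallP /(_ i); rewrite iJ => /eqP.
  have yo : forall i, i \notin J -> y i = p i.
    by move=> i iJ; case/andP: gy => /forallP /(_ i); rewrite iJ => /eqP.
  have yJ : forall i, i \in J -> h y i = y i.
    by move=> i iJ; case/andP: gy => _ /forallP /(_ i); rewrite iJ => /eqP.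
  have IJ : [set i | x i != y i] \subset J.
    by apply/subsetP => i; rewrite inE; apply: contraR => iJ; rewrite xo ?yo.
  have xy : x != y by apply/eqP => E; move: xyv; rewrite E eqxx.
  have [pi [inj piII irr flp]] : exists pi : V -> V,
    [/\ injective pi, pi @: [set i | x i != y i] = [set i | x i != y i],
     (forall S : {set V}, S \subset [set i | x i != y i] -> S != set0 -> pi @: S \subset S ->
         S = [set i | x i != y i]) &
     forall (S : {set V}) u, S \subset [set i | x i != y i] -> u \in [set i | x i != y i] ->
       (forall w, (h (flip (pt x S) u true) w != h (flip (pt x S) u false) w) = (w == pi u))
       /\ h (flip (pt x S) u (~~ x u)) (pi u) = ~~ x (pi u)].
    apply: (core (J := J)) => //.
    + exact: tw_nonexp.
    + move=> S SI Sfix.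
      have gS : good (pt x S).
        apply: goodI => // i iJ.
        have iI : i \notin [set i | x i != y i] by apply: contra iJ; apply: (subsetP IJ).
        have iS : i \notin S by apply: contra iI; apply: (subsetP SI).
        by rewrite /pt ffunE (negbTE iS) xo.
      have cI := cardsID S [set i | x i != y i]; rewrite (setIidPr SI) in cI.
      case vS: (v \in S).
      * right; apply/eqP; rewrite eqEcard SI /=.
        have <- : hamming x y = #|[set i | x i != y i]| by [].
        rewrite hxy -(hamming_x_pt x S); apply: minm2; apply/existsP; exists (x, pt x S).
        rewrite /= gx gS /pt ffunE vS eqxx andbT.
        by case: (x v).
      * left; apply: cards0_eq.
        have : m2 <= hamming (pt x S) y.
          apply: minm2; apply/existsP; exists (pt x S, y).
          by rewrite /= gy gS /pt ffunE vS xyv eqxx.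
        have e : hamming (pt x S) y = #|[set i | x i != y i] :\: S|.
          by rewrite -[in LHS](ptI x y) hamming_pt (symd_sub SI).
        have e2 : hamming x y = #|[set i | x i != y i]| by [].
        rewrite e -hxy e2; exact: ar2 cI.
  set I := [set i | x i != y i] in IJ piII irr flp.
  have I0 : I != set0 by exact: I_ne0.
  have k1 : 1 <= #|I| <= #|V| by rewrite card_gt0 I0 max_card.
  have vI : v \in I by rewrite inE.
  have := Hc #|I| k1.
  have : 2 ^ #|I| <= #|[set z | has_chordless_neg_cycle f z #|I|]|.
    apply: (@count_pts V x I (fun z => has_chordless_neg_cycle f z #|I|)) => S SI.
    have [c [sz ch mc par]] := @cyc V f t pi I x (pt x S) inj piII irr I0
      (fun u uI => arc_info (proj1 (flp S u SI uI)) (proj2 (flp S u SI uI))).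
    have sz' : size c == #|I| by rewrite sz.
    apply/existsP; exists (Tuple sz'); rewrite /= ch /= par.
    have -> : count t c = count_mem v c by apply: eq_count => i.
    by case/and3P: ch => uc _ _; rewrite count_uniq_mem // mc vI.
  move=> p2 p3; have := leq_trans p2 p3.
  have : 0 < 2 ^ #|I| by rewrite expn_gt0.
  exact: ar1.
Qed.
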